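(* For every $n\ge 1$, the path $P_n$ on $n$ vertices satisfies $\phi(P_n)<0.81\cdot 6^{n/4}$.
   Context: A subset $F$ of vertices of a graph $G$ is a dissociation set if $G[F]$ has maximum degree at most $1$; a maximal dissociation set is one not properly contained in another dissociation set; $\phi(G)$ is the number of maximal dissociation sets of $G$. *)

(* Defs.v *)
From mathcomp Require Import all_boot.
Set Implicit Arguments. Unset Strict Implicit. Unset Printing Implicit Defensive.

(* A simple graph on a finite vertex type T is given by its adjacency relation
   e (assumed symmetric and irreflexive; for the path below it is). *)

Definition dissociation (T : finType) (e : rel T) (F : {set T}) : bool :=
  [forall x in F, #|[set y in F | e x y]| <= 1].

Definition maximal_dissociation (T : finType) (e : rel T) (F : {set T}) : bool :=
  dissociation e F && [forall F' : {set T}, (F \proper F') ==> ~~ dissociation e F'].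

Definition phi (T : finType) (e : rel T) : nat :=
  #|[set F : {set T} | maximal_dissociation e F]|.

Definition path_rel (n : nat) : rel 'I_n :=
  fun i j => (i.+1 == j :> nat) || (j.+1 == i :> nat).
Arguments path_rel n : clear implicits.

(* Main.v *)
Require Import Defs.
From mathcomp Require Import all_boot zify.
From Stdlib Require Import Reals Lra.

Definition Lw (a b c d e : bool) : bool :=
  ~~ [&& b, c & d] && [|| c, a && b, b && d | d && e].

Fixpoint win (s : seq bool) : bool :=
  match s with
  | a :: ((b :: c :: d :: e :: _) as t) => Lw a b c d e && win t
  | _ => true
  end.

Lemma winP (t : seq bool) :
  win t = [forall j : 'I_(size t), (j + 4 < size t) ==>
     Lw (nth false t j) (nth false t j.+1) (nth false t j.+2) (nth false t j.+3) (nth false t j.+4)].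
Proof.
apply/idP/forallP.
- elim: t => [|a t IH]; first by move=> _ [].
  case: t IH => [|b [|c [|d [|e r]]]] IH /= H j; apply/implyP => hj; try (simpl in hj; lia).
  move/andP: H => [H1 H2].
  case: j hj => [[|k] hk] hj //=.
  have hk' : k < size [:: b, c, d, e & r] by simpl in *; lia.
  move: (IH H2 (Ordinal hk')) => /implyP /=; apply; simpl in hj; lia.
- elim: t => [|a t IH] //= H.
  case: t IH H => [|b [|c [|d [|e r]]]] IH H //=.
  apply/andP; split.
  + have h0 : 0 < (size [:: a, b, c, d, e & r]) by [].
    by move: (H (Ordinal h0)) => /implyP /=; apply; simpl; lia.
  + apply: IH => j. apply/implyP => hj.
    have hk : j.+1 < size [:: a, b, c, d, e & r] by simpl in *; lia.
    move: (H (Ordinal hk)) => /implyP /=; apply. simpl in *; lia.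
Qed.
Section S.
Variable n : nat.
Implicit Types F G : {set 'I_n}.

Definition memn F (j : nat) : bool := [exists i in F, val i == j].
Definition Hn F (j : nat) : bool := (2 <= j) && memn F (j - 2).

Lemma memnE F (i : 'I_n) : memn F i = (i \in F).
Proof.
rewrite /memn; apply/idP/idP => [/existsP [k /andP [kF /eqP ek]]|iF].
- by have -> : i = k by apply: val_inj.
- by apply/existsP; exists i; rewrite iF eqxx.
Qed.

Lemma memn_lt F j : memn F j -> j < n.
Proof. rewrite /memn => /existsP [i /andP [_ /eqP <-]]; exact: ltn_ord. Qed.

Lemma Hn_ge F j : Hn F j -> 2 <= j.
Proof. by case/andP. Qed.

Lemma Hn_lt F j : Hn F j -> j < n + 2.
Proof. case/andP => h /memn_lt; lia. Qed.

Arguments memn_lt {F j}.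
Arguments Hn_ge {F j}.
Arguments Hn_lt {F j}.

Lemma HnE F (i : 'I_n) : Hn F (i + 2) = (i \in F).
Proof. rewrite /Hn addnK memnE; have -> : 2 <= i + 2 by lia. by []. Qed.

Lemma HnE' F (i : nat) (hi : i < n) : Hn F (i + 2) = (Ordinal hi \in F).
Proof. by rewrite -HnE. Qed.

Lemma nbr_card F (x : 'I_n) :
  (#|[set y in F | path_rel n x y]| <= 1) = ~~ (Hn F (x + 1) && Hn F (x + 3)).
Proof.
apply/card_le1_eqP/idP.
- move=> H; apply/negP => /andP [h1 h3].
  have x1 : 1 <= x by move: (Hn_ge h1); lia.
  have l1 : x - 1 < n by have := ltn_ord x; lia.
  have l3 : x + 1 < n by move: (Hn_lt h3); lia.
  have i1 : Ordinal l1 \in [set y in F | path_rel n x y].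
    rewrite inE -HnE' /path_rel /=. apply/andP; split.
    + by have -> : x - 1 + 2 = x + 1 by lia.
    + apply/orP; right; apply/eqP; lia.
  have i3 : Ordinal l3 \in [set y in F | path_rel n x y].
    rewrite inE -HnE' /path_rel /=. apply/andP; split.
    + by have -> : x + 1 + 2 = x + 3 by lia.
    + apply/orP; left; apply/eqP; lia.
  move: (H _ _ i1 i3) => /(congr1 val) /=; lia.
- move=> H y z; rewrite !inE => /andP [yF ry] /andP [zF rz].
  apply: ord_inj.
  move: ry rz; rewrite /path_rel => /orP [/eqP ey | /eqP ey] /orP [/eqP ez | /eqP ez]; try lia.
  + exfalso; move/negP: H; apply; apply/andP; split.
    * have -> : x + 1 = z + 2 by lia. by rewrite HnE.
    * have -> : x + 3 = y + 2 by lia. by rewrite HnE.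
  + exfalso; move/negP: H; apply; apply/andP; split.
    * have -> : x + 1 = y + 2 by lia. by rewrite HnE.
    * have -> : x + 3 = z + 2 by lia. by rewrite HnE.
Qed.

Lemma dissP F : dissociation (path_rel n) F =
  [forall x : 'I_n, ~~ [&& Hn F (x + 1), Hn F (x + 2) & Hn F (x + 3)]].
Proof.
apply/forallP/forallP => H x; move: (H x); rewrite HnE.
- case xF: (x \in F) => /=; last by rewrite andbF.
  move=> h; have : ~~ (Hn F (x + 1) && Hn F (x + 3)) by rewrite -(nbr_card F x); exact: h.
  by case: (Hn F (x+1)).
- case xF: (x \in F) => //= h.
  have : ~~ (Hn F (x + 1) && Hn F (x + 3)) by case: (Hn F (x+1)) h.
  by rewrite -(nbr_card F x).
Qed.

Lemma memn_add F v j : memn (v |: F) j = (j == v) || memn F j.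
Proof.
rewrite /memn; apply/idP/idP.
- case/existsP=> i /andP [ /setU1P [-> | iF] /eqP <-]; first by rewrite eqxx.
  by apply/orP; right; apply/existsP; exists i; rewrite iF eqxx.
- case/orP => [/eqP -> | /existsP [i /andP [iF ei]]]; apply/existsP.
  + by exists v; rewrite setU11 eqxx.
  + by exists i; rewrite ei setU1r.
Qed.

Lemma Hn_add F (v : 'I_n) j : Hn (v |: F) j = Hn F j || (j == v + 2).
Proof.
rewrite /Hn memn_add.
case: (leqP 2 j) => h /=.
- have -> : (j - 2 == v) = (j == v + 2) by apply/eqP/eqP; lia.
  by rewrite orbC.
- symmetry; apply/eqP; lia.
Qed.

Lemma hered F G : F \subset G -> dissociation (path_rel n) G -> dissociation (path_rel n) F.
Proof.
move=> sFG /forallP H; apply/forallP => x; apply/implyP => xF.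
move: (H x) => /implyP /(_ (subsetP sFG _ xF)); apply: leq_trans.
apply: subset_leq_card; apply/subsetP => y; rewrite !inE => /andP [yF ->].
by rewrite (subsetP sFG _ yF).
Qed.

Lemma maxP F : maximal_dissociation (path_rel n) F =
  dissociation (path_rel n) F &&
  [forall v : 'I_n, (v \in F) || ~~ dissociation (path_rel n) (v |: F)].
Proof.
rewrite /maximal_dissociation; case dF: (dissociation _ F) => //=.
apply/forallP/forallP => H v.
- case vF: (v \in F) => //=.
  move: (H (v |: F)) => /implyP; apply; apply/properP; split.
  + by apply/subsetP => y yF; rewrite setU1r.
  + by exists v; rewrite ?setU11 ?vF.
- apply/implyP => /properP [sFG [w wG wF]].
  apply/negP => dG.
  move: (H w); rewrite (negbTE wF) /=; apply/negP/negPn.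
  apply: (@hered _ v _ dG); apply/subsetP => y /setU1P [-> // | yF].
  exact: (subsetP sFG).
Qed.

Lemma ext_char F (v : 'I_n) : dissociation (path_rel n) F -> v \notin F ->
  ~~ dissociation (path_rel n) (v |: F) =
  [|| Hn F v && Hn F (v + 1), Hn F (v + 1) && Hn F (v + 3) | Hn F (v + 3) && Hn F (v + 4)].
Proof.
rewrite (dissP F) (dissP (v |: F)) negb_forall => /forallP dF vF.
have hv : Hn F (v + 2) = false by rewrite HnE (negbTE vF).
apply/idP/idP.
- case/existsP=> x; rewrite negbK !Hn_add.
  move: (dF x); set h := Hn F.
  case E1: (x + 1 == v + 2); case E2: (x + 2 == v + 2); case E3: (x + 3 == v + 2);
    rewrite ?orbT ?orbF; move/eqP: E1 => E1; move/eqP: E2 => E2; move/eqP: E3 => E3; try lia.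
  + move=> _ /andP [_ /andP [h2 h3]].
    have e2 : x + 2 = v + 3 by lia. have e3 : x + 3 = v + 4 by lia.
    by rewrite e2 in h2; rewrite e3 in h3; rewrite h2 h3 !orbT.
  + move=> _ /andP [h1 /andP [_ h3]].
    have e1 : x + 1 = v + 1 by lia. have e3 : x + 3 = v + 3 by lia.
    by rewrite e1 in h1; rewrite e3 in h3; rewrite h1 h3 orbT.
  + move=> _ /andP [h1 /andP [h2 _]].
    have e1 : x + 1 = v by lia. have e2 : x + 2 = v + 1 by lia.
    by rewrite e1 in h1; rewrite e2 in h2; rewrite h1 h2.
- case/or3P => /andP [h1 h2]; apply/existsP.
  + have vge : 2 <= v by apply: (Hn_ge h1).
    have lt : v - 1 < n by have := ltn_ord v; lia.
    exists (Ordinal lt); rewrite negbK !Hn_add /=.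
    have -> : v - 1 + 1 = v by lia. have -> : v - 1 + 2 = v + 1 by lia.
    have -> : v - 1 + 3 = v + 2 by lia.
    by rewrite h1 h2 eqxx orbT.
  + exists v; rewrite negbK !Hn_add /=.
    by rewrite h1 h2 eqxx orbT.
  + have lt : v + 1 < n by move: (Hn_lt h2); lia.
    exists (Ordinal lt); rewrite negbK !Hn_add /=.
    have -> : v + 1 + 1 = v + 2 by lia. have -> : v + 1 + 2 = v + 3 by lia.
    have -> : v + 1 + 3 = v + 4 by lia.
    by rewrite h1 h2 eqxx !orbT.
Qed.

Lemma max_char F : maximal_dissociation (path_rel n) F =
  [forall j : 'I_n, Lw (Hn F j) (Hn F (j + 1)) (Hn F (j + 2)) (Hn F (j + 3)) (Hn F (j + 4))].
Proof.
apply/idP/forallP.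
- move=> MF; have dF : dissociation (path_rel n) F by case/andP: MF.
  move: MF; rewrite maxP => /andP [_ /forallP M] j.
  move: dF; rewrite dissP => /forallP D; rewrite /Lw (D j) /=.
  move: (M j); rewrite -(HnE F j); case E: (Hn F (j + 2)) => //= hj.
  have dF : dissociation (path_rel n) F by rewrite dissP; apply/forallP.
  have jF : j \notin F by rewrite -(HnE F j) E.
  by rewrite -(ext_char F j dF jF).
- move=> H.
  have dF : dissociation (path_rel n) F.
    rewrite dissP; apply/forallP => j; by case/andP: (H j).
  rewrite maxP dF /=; apply/forallP => v.
  case vF: (v \in F) => //=.
  rewrite (ext_char F v dF) ?vF //.
  case/andP: (H v) => _; rewrite HnE vF /=.
  by [].
Qed.
End S.
Arguments memn {n}.
Arguments Hn {n}.
Arguments memnE {n}.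
Arguments memn_lt {n F j}.

Definition pad (s : seq bool) : seq bool := false :: false :: s ++ [:: false; false].

Fixpoint allseqs (n : nat) : seq (seq bool) :=
  match n with
  | 0 => [:: [::]]
  | k.+1 => map (cons false) (allseqs k) ++ map (cons true) (allseqs k)
  end.

Definition toSet (n : nat) (s : seq bool) : {set 'I_n} := [set i : 'I_n | nth false s i].

Lemma memn_toSet n s k : size s = n -> memn (toSet n s) k = nth false s k.
Proof.
move=> hs; case: (ltnP k n) => hk.
- by rewrite -[k]/(nat_of_ord (Ordinal hk)) memnE inE.
- rewrite nth_default; last by rewrite hs.
  by apply: negbTE; apply/negP => h; have := memn_lt h; lia.
Qed.

Lemma Hn_toSet n s j : size s = n -> Hn (toSet n s) j = nth false (pad s) j.
Proof.
move=> hs; case: j => [|[|k]] //.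
rewrite /Hn /=; have -> : k.+2 - 2 = k by lia.
rewrite memn_toSet // nth_cat; case: ltnP => // hk.
rewrite nth_default //; case: (k - size s) => [|[|m]] //=; by rewrite nth_nil.
Qed.

Lemma max_toSet n s : size s = n ->
  maximal_dissociation (path_rel n) (toSet n s) = win (pad s).
Proof.
move=> hs; rewrite max_char winP.
have hp : size (pad s) = n + 4 by rewrite /pad /= size_cat hs /=; lia.
apply/forallP/forallP.
- move=> H j; apply/implyP => hj.
  have hjn : j < n by lia.
  move: (H (Ordinal hjn)); rewrite /= !Hn_toSet // !addn1 !addn2 !addn3 !addn4.
  by [].
- move=> H j.
  have hj : j < size (pad s) by have := ltn_ord j; lia.
  move: (H (Ordinal hj)) => /implyP.
  rewrite !Hn_toSet // !addn1 !addn2 !addn3 !addn4.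
  apply; move: hp; rewrite /= => ->; have := ltn_ord j; lia.
Qed.

Lemma mem_allseqs n s : (s \in allseqs n) = (size s == n).
Proof.
elim: n s => [|n IH] [|b s] //=; rewrite mem_cat.
- by apply/orP => -[] /mapP [].
- rewrite eqSS -IH; case: b.
  + apply/orP/idP => [[/mapP [t _] //| /mapP [t ht [->]] //] | h]; right; exact: map_f.
  + apply/orP/idP => [[/mapP [t ht [->]] //| /mapP [t _] //] | h]; left; exact: map_f.
Qed.

Lemma uniq_allseqs n : uniq (allseqs n).
Proof.
elim: n => [|n IH] //=; rewrite cat_uniq !map_inj_uniq // ?IH /=; last first.
- by move=> x y [].
- by move=> x y [].
rewrite andbT; apply/hasPn => x /mapP [t _ ->]; apply/mapP => -[u _] //.
Qed.

Lemma phi_cnt n : phi (path_rel n) = count (fun s => win (pad s)) (allseqs n).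
Proof.
rewrite /phi.
set T := map (toSet n) (filter (fun s => win (pad s)) (allseqs n)).
have uT : uniq T.
  rewrite map_inj_in_uniq ?filter_uniq ?uniq_allseqs //.
  move=> s1 s2; rewrite !mem_filter !mem_allseqs => /andP [_ /eqP h1] /andP [_ /eqP h2] e.
  apply: (@eq_from_nth _ false); first by rewrite h1 h2.
  move=> i; rewrite h1 => hi.
  have := congr1 (fun F : {set 'I_n} => Ordinal hi \in F) e; rewrite /= !inE /=. by [].
have eT : [set F | maximal_dissociation (path_rel n) F] =i T.
  move=> F; rewrite inE; apply/idP/mapP.
  - move=> MF; exists (mkseq (memn F) n).
    + rewrite mem_filter mem_allseqs size_mkseq eqxx andbT.
      rewrite -(max_toSet n) ?size_mkseq //.
      have -> : toSet n (mkseq (memn F) n) = F.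
        by apply/setP => i; rewrite inE nth_mkseq // memnE.
      exact: MF.
    + by apply/setP => i; rewrite inE nth_mkseq // memnE.
  - case=> s; rewrite mem_filter mem_allseqs => /andP [ws /eqP hs] ->.
    by rewrite max_toSet.
rewrite (eq_card eT) (card_uniqP uT) size_map size_filter.
by [].
Qed.

Definition cnt (n : nat) : nat := count (fun s => win (pad s)) (allseqs n).

Definition G (k : nat) (a b c d : bool) : nat :=
  count (fun u => win [:: a, b, c, d & u ++ [:: false; false]]) (allseqs k).

Lemma count_false (A : seq (seq bool)) : count (fun _ => false) A = 0.
Proof. by elim: A. Qed.

Lemma cnt_G k : cnt k.+2 =
  G k false false false false + G k false false false true +
  (G k false false true false + G k false false true true).
Proof. by rewrite /cnt /= !map_cat !count_cat !count_map addnA. Qed.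

Lemma count_andb (l : bool) (P : pred (seq bool)) A :
  count (fun u => l && P u) A = if l then count P A else 0.
Proof. by case: l; elim: A => //= x A ->. Qed.

Lemma count_step a b c d x A :
  count (fun u => win [:: a, b, c, d, x & u ++ [:: false; false]]) A =
  if Lw a b c d x then count (fun u => win [:: b, c, d, x & u ++ [:: false; false]]) A else 0.
Proof. by rewrite -count_andb. Qed.

Lemma G_S k a b c d : G k.+1 a b c d =
  (if Lw a b c d false then G k b c d false else 0) +
  (if Lw a b c d true then G k b c d true else 0).
Proof.
rewrite /G [allseqs _]/= count_cat !count_map.
by rewrite !count_step.
Qed.

Definition w (a b c d : bool) : nat :=
  nth 0 [:: 2; 10; 15; 14; 2; 20; 19; 2; 2; 10; 15; 14; 8; 20; 19; 2]
    (8 * a + 4 * b + 2 * c + d).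

Lemma wstep a b c d :
  20 * ((if Lw a b c d false then w b c d false else 0) +
        (if Lw a b c d true then w b c d true else 0)) <= 31 * w a b c d.
Proof. by case: a; case: b; case: c; case: d; vm_compute. Qed.

Lemma Gbase a b c d : G 9 a b c d <= w a b c d.
Proof. by case: a; case: b; case: c; case: d; vm_compute. Qed.

Lemma Gbound j a b c d : expn 20 j * G (9 + j) a b c d <= expn 31 j * w a b c d.
Proof.
elim: j a b c d => [|j IH] a b c d; first by rewrite !expn0 !mul1n Gbase.
rewrite addnS G_S !expnS.
have h1 : expn 20 j * (if Lw a b c d false then G (9 + j) b c d false else 0) <=
          expn 31 j * (if Lw a b c d false then w b c d false else 0).
  by case: (Lw a b c d false); rewrite ?muln0 ?IH.
have h2 : expn 20 j * (if Lw a b c d true then G (9 + j) b c d true else 0) <=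
          expn 31 j * (if Lw a b c d true then w b c d true else 0).
  by case: (Lw a b c d true); rewrite ?muln0 ?IH.
have h3 := wstep a b c d.
move: h1 h2 h3.
set X := (if Lw a b c d false then G (9 + j) b c d false else 0).
set Y := (if Lw a b c d true then G (9 + j) b c d true else 0).
set WX := (if Lw a b c d false then w b c d false else 0).
set WY := (if Lw a b c d true then w b c d true else 0).
set p := expn 20 j. set q := expn 31 j. set W := w a b c d.
move=> h1 h2 h3.
have h4 : q * (20 * (WX + WY)) <= q * (31 * W) by rewrite leq_mul2l h3 orbT.
nia.
Qed.

Ltac solve_small :=
  match goal with |- context [cnt ?m] =>
    let v := eval vm_compute in (cnt m) in
    rewrite (_ : cnt m = v); [lia | by vm_compute] end.

Lemma natbound n : 1 <= n -> 100 * expn 20 n * cnt n < 81 * expn 31 n.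
Proof.
case: (ltnP n 11) => hn h1.
- do 11! (case: n hn h1 => [|n] hn h1; [try solve_small; try lia|]).
  lia.
- have -> : n = (9 + (n - 11)).+2 by lia.
  set j := n - 11.
  rewrite cnt_G.
  have b1 := Gbound j false false false false.
  have b2 := Gbound j false false false true.
  have b3 := Gbound j false false true false.
  have b4 := Gbound j false false true true.
  move: b1 b2 b3 b4; rewrite /w /=.
  have -> : (9 + j).+2 = 11 + j by lia.
  rewrite expnD [expn 31 (11 + j)]expnD.
  have q1 : 0 < expn 31 j by rewrite expn_gt0.
  set p := expn 20 j. set q := expn 31 j.
  move: (G _ _ _ _ _) => g1; move: (G _ _ _ _ _) => g2; move: (G _ _ _ _ _) => g3; move: (G _ _ _ _ _) => g4.
  move=> b1 b2 b3 b4.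
  nia.
Qed.
Lemma expn_pow m k : expn m k = Nat.pow m k.
Proof. elim: k => [|k IH]; first by rewrite expn0. by rewrite expnS IH. Qed.

Open Scope R_scope.

Lemma key (n : nat) : leq 1 n -> pow (31/20) n < Rpower 6 (INR n / 4).
Proof.
move=> h1.
rewrite -Rpower_pow; last lra.
rewrite /Rpower; apply: exp_increasing.
have hn : 0 < INR n by apply: lt_0_INR; apply/ltP.
have hl : 4 * ln (31/20) < ln 6.
  have e4 : 4 * ln (31/20) = ln (pow (31/20) 4).
    rewrite ln_pow; last lra.
    replace (INR 4) with 4 by (simpl; lra). by [].
  rewrite e4; apply: ln_increasing; simpl; lra.
nra.
Qed.

Theorem lemma2p5 (n : nat) :
  leq 1 n ->
  INR (phi (path_rel n)) < (81 / 100) * Rpower 6 (INR n / 4).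
Proof.
move=> h1.
have hb := natbound n h1.
rewrite phi_cnt -/(cnt n).
move/ltP: hb; rewrite !expn_pow => hb.
apply lt_INR in hb.
rewrite !mult_INR !pow_INR in hb.
have k := key n h1.
have p20 : 0 < pow (INR 20) n by apply: pow_lt; simpl; lra.
have e : pow (31/20) n * pow (INR 20) n = pow (INR 31) n.
  rewrite -Rpow_mult_distr; f_equal; simpl; lra.
replace (INR 100) with 100 in hb by (simpl; lra).
replace (INR 81) with 81 in hb by (simpl; lra).
nra.
Qed.
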